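(* Let $(A;R)\in\mathcal C$ and work in $PG(A;R)$. Let $A_1,A_2,C$ be closed sets with $d(A_1\cup A_2)=d(A_1)+d(A_2)-d(A_1\cap A_2)$. Then $$d((A_1\cap C)\cup(A_2\cap C))=d(A_1\cap C)+d(A_2\cap C)-d(A_1\cap A_2\cap C).$$
   Context: A set system is a pair $(A;R)$ where $R$ is a set of finite non-empty subsets of $A$; for $X\subseteq A$, $R[X]=\{r\in R:r\subseteq X\}$ and $\delta(X)=|X|-|R[X]|$. $\mathcal C$ is the class of finite set systems with $\delta(X)\ge0$ for all $X\subseteq A$. $d(X)=\min\{\delta(Y):X\subseteq Y\subseteq A\}$, $\mathrm{cl}(X)=\{y:d(X\cup\{y\})=d(X)\}$, and $PG(A;R)$ is the matroid $(A,\mathrm{cl})$ with rank function $d$; closed sets are $F$ with $\mathrm{cl}(F)=F$. *)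

(* Defs.v *)
From HB Require Import structures.
From mathcomp Require Import all_boot all_order all_algebra.
Set Implicit Arguments. Unset Strict Implicit. Unset Printing Implicit Defensive.
Import Order.TTheory GRing.Theory Num.Theory.
Local Open Scope ring_scope.

Definition set_system (A : finType) (R : {set {set A}}) : Prop :=
  forall r, r \in R -> r != set0.

Definition RX (A : finType) (R : {set {set A}}) (X : {set A}) : {set {set A}} :=
  [set r in R | r \subset X].

Definition delta (A : finType) (R : {set {set A}}) (X : {set A}) : int :=
  (#|X|%:Z - #|RX R X|%:Z).

Definition in_C (A : finType) (R : {set {set A}}) : Prop :=
  set_system R /\ forall X : {set A}, 0 <= delta R X.

(* d(X) = min { delta(Y) : X ⊆ Y ⊆ A }  (the set is nonempty: Y = A) *)
Definition dd (A : finType) (R : {set {set A}}) (X : {set A}) : int :=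
  \big[Num.min/delta R [set: A]]_(Y : {set A} | X \subset Y) delta R Y.

Definition cl (A : finType) (R : {set {set A}}) (X : {set A}) : {set A} :=
  [set y | dd R (y |: X) == dd R X].

Definition is_closed (A : finType) (R : {set {set A}}) (F : {set A}) : Prop :=
  cl R F = F.

(* Main.v *)
Require Import Defs.
From HB Require Import structures.
From mathcomp Require Import all_boot all_order all_algebra.
From mathcomp Require Import zify.
Import Order.TTheory GRing.Theory Num.Theory.
Local Open Scope ring_scope.

Section S.
Variables (A : finType) (R : {set {set A}}).

Lemma dd_le (X Y : {set A}) : X \subset Y -> dd R X <= delta R Y.
Proof.
move=> HY; rewrite /dd (bigD1 Y HY) /=.
by rewrite ge_min lexx.
Qed.

Lemma dd_ex (X : {set A}) : exists2 Y : {set A}, X \subset Y & dd R X = delta R Y.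
Proof.
rewrite /dd; apply: (big_ind (fun m => exists2 Y : {set A}, X \subset Y & m = delta R Y)).
- by exists [set: A]; rewrite ?subsetT.
- move=> x y [Y1 h1 ->] [Y2 h2 ->].
  by case: (leP (delta R Y1) (delta R Y2)) => _; [exists Y1 | exists Y2].
- by move=> Y HY; exists Y.
Qed.

Lemma dd_mono (X Y : {set A}) : X \subset Y -> dd R X <= dd R Y.
Proof.
move=> h; have [Z hZ ->] := dd_ex Y; apply: dd_le; exact: subset_trans hZ.
Qed.

Lemma submod_eq (X Y : {set A}) :
  delta R (X :|: Y) + delta R (X :&: Y) =
  delta R X + delta R Y - (#|RX R (X :|: Y)|%:Z - #|RX R X :|: RX R Y|%:Z).
Proof.
have h1 := cardsUI X Y.
have h2 := cardsUI (RX R X) (RX R Y).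
have e : RX R X :&: RX R Y = RX R (X :&: Y).
  apply/setP => r; rewrite !inE subsetI.
  by case: (r \in R); case: (r \subset X); case: (r \subset Y).
rewrite e in h2; rewrite /delta.
have h1' : (#|X :|: Y|%:Z + #|X :&: Y|%:Z = #|X|%:Z + #|Y|%:Z)%R.
  by rewrite -!PoszD h1.
have h2' : (#|RX R X :|: RX R Y|%:Z + #|RX R (X :&: Y)|%:Z = #|RX R X|%:Z + #|RX R Y|%:Z)%R.
  by rewrite -!PoszD h2.
lia.
Qed.

Lemma RXU_sub (X Y : {set A}) : RX R X :|: RX R Y \subset RX R (X :|: Y).
Proof.
apply/subsetP => r; rewrite !inE => /orP[/andP[-> h]|/andP[-> h]] /=.
  by apply: subset_trans h (subsetUl _ _).
by apply: subset_trans h (subsetUr _ _).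
Qed.

Definition ss (X : {set A}) := forall W : {set A}, X \subset W -> delta R X <= delta R W.

Lemma ss_dd (X : {set A}) : ss X -> dd R X = delta R X.
Proof.
move=> h; apply/eqP; rewrite eq_le dd_le //=.
have [Y hY ->] := dd_ex X; exact: h.
Qed.

Lemma closed_ss (F : {set A}) : is_closed R F -> ss F.
Proof.
move=> hc; have [Y hY hd] := dd_ex F.
have YF : Y \subset F.
  apply/subsetP => y yY; rewrite -hc /cl inE; apply/eqP/eqP; rewrite eq_le.
  rewrite (dd_mono _ _ (subsetUr [set y] F)) andbT.
  rewrite hd; apply: dd_le.
  by rewrite subUset sub1set yY.
have -> : F = Y by apply/eqP; rewrite eqEsubset hY YF.
by move=> W hW; rewrite -hd; apply: dd_le; exact: subset_trans hY hW.
Qed.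

Lemma ss_step (X W : {set A}) : ss X -> delta R (W :&: X) <= delta R W.
Proof.
move=> h; have e := submod_eq W X.
have le1 := h (W :|: X) (subsetUr _ _).
have le2 : (#|RX R W :|: RX R X| <= #|RX R (W :|: X)|)%N.
  exact: subset_leq_card (RXU_sub W X).
lia.
Qed.

Lemma ss_I (X Y : {set A}) : ss X -> ss Y -> ss (X :&: Y).
Proof.
move=> hX hY W hW.
have e : (W :&: X) :&: Y = X :&: Y.
  apply/setP => x; rewrite !inE; have := subsetP hW x; rewrite !inE.
  by case: (x \in W); case: (x \in X); case: (x \in Y) => // ->.
have := @ss_step Y (W :&: X) hY; rewrite e => h1.
have := @ss_step X W hX; lia.
Qed.

End S.
Arguments dd_le {A R X Y}.
Arguments dd_ex {A R}.
Arguments dd_mono {A R X Y}.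
Arguments closed_ss {A R F}.
Arguments ss_dd {A R X}.
Arguments ss_I {A R X Y}.
Arguments RXU_sub {A}.
Arguments submod_eq {A}.

Theorem lemma6p3 (A : finType) (R : {set {set A}}) (A1 A2 C : {set A}) :
  in_C R ->
  is_closed R A1 -> is_closed R A2 -> is_closed R C ->
  dd R (A1 :|: A2) = dd R A1 + dd R A2 - dd R (A1 :&: A2) ->
  dd R ((A1 :&: C) :|: (A2 :&: C)) =
    dd R (A1 :&: C) + dd R (A2 :&: C) - dd R (A1 :&: A2 :&: C).
Proof.
move=> _ c1 c2 cC H.
have s1 := closed_ss c1; have s2 := closed_ss c2; have sC := closed_ss cC.
have s12 := ss_I s1 s2.
rewrite (ss_dd s1) (ss_dd s2) (ss_dd s12) in H.
have e := submod_eq R A1 A2.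
have le0 := dd_le (R:=R) (subxx (A1 :|: A2)).
have le2 : (#|RX R A1 :|: RX R A2| <= #|RX R (A1 :|: A2)|)%N.
  exact: subset_leq_card (RXU_sub R A1 A2).
have ceq : #|RX R A1 :|: RX R A2| = #|RX R (A1 :|: A2)| by lia.
have RXeq : RX R (A1 :|: A2) \subset RX R A1 :|: RX R A2.
  have /subset_cardP/(_ (RXU_sub R A1 A2)) hE := ceq.
  by apply/subsetP => r; rewrite hE.
have sF := ss_I s1 sC; have sG := ss_I s2 sC.
have hU : dd R (A1 :|: A2) = delta R (A1 :|: A2) by lia.
have sU : ss A R (A1 :|: A2) by move=> W hW; rewrite -hU; apply: dd_le.
have sFG : ss A R ((A1 :&: C) :|: (A2 :&: C)) by rewrite -setIUl; apply: ss_I.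
have sI := ss_I s12 sC.
rewrite (ss_dd sF) (ss_dd sG) (ss_dd sI) (ss_dd sFG).
have eI : (A1 :&: C) :&: (A2 :&: C) = A1 :&: A2 :&: C.
  by apply/setP => x; rewrite !inE; case: (x \in A1); case: (x \in A2); case: (x \in C).
suff hRX : RX R ((A1 :&: C) :|: (A2 :&: C)) = RX R (A1 :&: C) :|: RX R (A2 :&: C).
  have := submod_eq R (A1 :&: C) (A2 :&: C); rewrite eI hRX subrr subr0; lia.
apply/eqP; rewrite eqEsubset RXU_sub andbT.
apply/subsetP => r; rewrite inE => /andP[rR rs].
have : r \in RX R (A1 :|: A2).
  rewrite inE rR /=; apply: subset_trans rs _.
  by rewrite -setIUl subsetIl.
move/(subsetP RXeq); rewrite !inE rR /= => /orP[h|h]; apply/orP; [left|right];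
  apply/subsetP => x xr; have := subsetP rs x xr; have := subsetP h x xr;
  rewrite !inE; case: (x \in A1); case: (x \in A2); case: (x \in C) => //=.
Qed.
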